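(* Let $X$ be an $n\times p$ real matrix ($n \ge p$) whose columns have $\ell_2$-norm $1$, such that $X^T X$ is invertible, and let $Y\in\mathbb{R}^n$. Let $M=(X^TX)^{-1}$ and suppose that $M$ is strictly diagonally dominant: $$M_{jj} > \sum_{i\neq j} |M_{ij}| \quad \text{for all } j=1,\dots,p.$$ For $\lambda>0$, the Lasso solution is the minimizer of $$\min_{\beta\in\mathbb{R}^p} \tfrac12 \|Y-X\beta\|_2^2 + \lambda\|\beta\|_1,$$ and the Dantzig solution is the minimizer of $$\min_{\beta\in\mathbb{R}^p} \|\beta\|_1 \quad\text{subject to}\quad \|X^T(Y-X\beta)\|_\infty \le \lambda.$$ Then for every $\lambda>0$ the Lasso solution and the Dantzig solution are identical, i.e., the Lasso and Dantzig regularization paths $\lambda\mapsto\hat\beta_\lambda$ coincide.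
   Context: $\|\cdot\|_1$, $\|\cdot\|_2$, $\|\cdot\|_\infty$ denote the usual $\ell_1$, $\ell_2$, $\ell_\infty$ norms on Euclidean space. The normalization of the columns of $X$ to unit $\ell_2$-norm is a standing assumption of the paper. *)

(* Defs.v *)
From mathcomp Require Import all_boot all_order all_algebra.
Set Implicit Arguments. Unset Strict Implicit. Unset Printing Implicit Defensive.
Import Order.TTheory GRing.Theory Num.Theory.
Local Open Scope ring_scope.

Section Defs.
Variable R : rcfType.

Definition norm1 {m : nat} (v : 'cV[R]_m) : R := \sum_(i < m) `|v i 0|.
Definition sqnorm2 {m : nat} (v : 'cV[R]_m) : R := \sum_(i < m) (v i 0) ^+ 2.
Definition norm2 {m : nat} (v : 'cV[R]_m) : R := Num.sqrt (sqnorm2 v).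
Definition norminf {m : nat} (v : 'cV[R]_m) : R :=
  \big[Num.max/0]_(i < m) `|v i 0|.

Variables (n p : nat).

Definition lasso_obj (X : 'M[R]_(n, p)) (Y : 'cV[R]_n) (lam : R) (b : 'cV[R]_p) : R :=
  2^-1 * sqnorm2 (Y - X *m b) + lam * norm1 b.

Definition is_lasso_sol X Y lam (b : 'cV[R]_p) : Prop :=
  forall b' : 'cV[R]_p, lasso_obj X Y lam b <= lasso_obj X Y lam b'.

Definition dantzig_feasible (X : 'M[R]_(n, p)) (Y : 'cV[R]_n) (lam : R) (b : 'cV[R]_p) : Prop :=
  norminf (X^T *m (Y - X *m b)) <= lam.

Definition is_dantzig_sol X Y lam (b : 'cV[R]_p) : Prop :=
  dantzig_feasible X Y lam b /\
  forall b' : 'cV[R]_p, dantzig_feasible X Y lam b' -> norm1 b <= norm1 b'.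

End Defs.

(* Main.v *)
Require Import Defs.
From mathcomp Require Import all_boot all_order all_algebra.
From mathcomp Require Import ring lra.
Import Order.TTheory GRing.Theory Num.Theory.
Local Open Scope ring_scope.

Lemma dotT (R : rcfType) m k (A : 'M[R]_(m,k)) (e : 'cV[R]_m) (d : 'cV[R]_k) :
  \sum_i e i 0 * (A *m d) i 0 = \sum_j (A^T *m e) j 0 * d j 0.
Proof.
under eq_bigr do rewrite mxE big_distrr.
rewrite exchange_big; apply: eq_bigr => j _; rewrite mxE big_distrl.
by apply: eq_bigr => i _ /=; rewrite mxE mulrCA mulrA.
Qed.

Lemma objdiff (R : rcfType) n p (X : 'M[R]_(n,p)) Y lam b d :
  lasso_obj X Y lam (b + d) - lasso_obj X Y lam b =
  - \sum_j (X^T *m (Y - X *m b)) j 0 * d j 0 + 2^-1 * sqnorm2 (X *m d)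
  + lam * (norm1 (b + d) - norm1 b).
Proof.
rewrite /lasso_obj /sqnorm2 mulmxDr opprD addrA.
set e := Y - X *m b.
have -> : \sum_(i < n) (e - X *m d) i 0 ^+ 2 =
   \sum_(i < n) e i 0 ^+ 2 - 2 * \sum_i e i 0 * (X *m d) i 0
   + \sum_(i < n) (X *m d) i 0 ^+ 2.
  rewrite mulr_sumr -sumrB -big_split /=; apply: eq_bigr => i _.
  rewrite !mxE; ring.
rewrite dotT; by field.
Qed.
Arguments objdiff {R n p}.

Lemma scal_bound (R : rcfType) (lam r b : R) : 0 < lam ->
  (forall t, 0 <= - (t * r) + 2^-1 * t ^+ 2 + lam * (`|b + t| - `|b|)) ->
  `|r| <= lam.
Proof.
move=> lp H; rewrite leNgt; apply/negP => hr.
have [rp|rn] := lerP 0 r.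
  have h := H (r - lam); have n1 := ler_normD b (r - lam).
  have e : `|r - lam| = r - lam by apply/ger0_norm; move: hr; rewrite ger0_norm //; lra.
  move: hr; rewrite ger0_norm // => hr.
  have : lam * (`|b + (r - lam)| - `|b|) <= lam * (r - lam) by rewrite ler_pM2l //; lra.
  nra.
have h := H (r + lam); have n1 := ler_normD b (r + lam).
have e : `|r + lam| = - (r + lam) by apply/ler0_norm; move: hr; rewrite ltr0_norm //; lra.
move: hr; rewrite ltr0_norm // => hr.
have : lam * (`|b + (r + lam)| - `|b|) <= lam * (- (r + lam)) by rewrite ler_pM2l //; lra.
nra.
Qed.

Lemma scal_pos (R : rcfType) (lam r b : R) : 0 < lam -> 0 < b -> `|r| <= lam ->
  (forall t, 0 <= - (t * r) + 2^-1 * t ^+ 2 + lam * (`|b + t| - `|b|)) ->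
  r = lam.
Proof.
move=> lp bp hr H; apply/eqP; rewrite eq_le; move: (hr); rewrite ler_norml => /andP[_ ->] /=.
rewrite leNgt; apply/negP => rl.
have [hb|hb] := lerP b (lam - r).
  have h := H (- b); move: h; rewrite addrN normr0 (gtr0_norm bp) => h.
  nra.
have h := H (r - lam); move: h.
rewrite (gtr0_norm bp) (@gtr0_norm _ (b + (r - lam))); last by lra.
nra.
Qed.

Lemma scal_kkt (R : rcfType) (lam r b : R) : 0 < lam ->
  (forall t, 0 <= - (t * r) + 2^-1 * t ^+ 2 + lam * (`|b + t| - `|b|)) ->
  `|r| <= lam /\ r * b = lam * `|b|.
Proof.
move=> lp H; have hr := @scal_bound _ lam r b lp H; split => //.
have [bp|bn|<-] := ltrgtP 0 b; last by rewrite mulr0 normr0 mulr0.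
- by rewrite (@scal_pos _ lam r b lp bp hr H) gtr0_norm.
- have bp : 0 < - b by rewrite oppr_gt0.
  have hr' : `|- r| <= lam by rewrite normrN.
  have H' : forall t, 0 <= - (t * - r) + 2^-1 * t ^+ 2 + lam * (`|- b + t| - `|- b|).
    move=> t; have := H (- t).
    rewrite mulNr opprK mulrN sqrrN opprK.
    have -> : - b + t = - (b - t) by rewrite opprB addrC.
    by rewrite !normrN.
  have := @scal_pos _ lam (- r) (- b) lp bp hr' H'; rewrite ltr0_norm // => e.
  by rewrite -[r]opprK e mulNr mulrN.
Qed.

Definition resid (R : rcfType) n p (X : 'M[R]_(n,p)) (Y : 'cV[R]_n) (b : 'cV[R]_p) :=
  X^T *m (Y - X *m b).
Arguments resid {R n p}.

Lemma sqnorm2_ge0 (R : rcfType) m (v : 'cV[R]_m) : 0 <= sqnorm2 v.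
Proof. by apply: sumr_ge0 => i _; apply: sqr_ge0. Qed.
Arguments sqnorm2_ge0 {R m}.

Lemma kkt_lasso (R : rcfType) n p (X : 'M[R]_(n,p)) Y lam b : 0 < lam ->
  (forall j, `|resid X Y b j 0| <= lam) ->
  (forall j, resid X Y b j 0 * b j 0 = lam * `|b j 0|) ->
  is_lasso_sol X Y lam b.
Proof.
move=> lp h1 h2 b'; rewrite -subr_ge0.
have eb : b + (b' - b) = b' by rewrite addrC subrK.
have := objdiff X Y lam b (b' - b); rewrite eb => ->.
change (X^T *m (Y - X *m b)) with (resid X Y b).
have e1 : \sum_j resid X Y b j 0 * (b' - b) j 0 =
   \sum_j resid X Y b j 0 * b' j 0 - lam * norm1 b.
  rewrite /norm1 mulr_sumr -sumrB; apply: eq_bigr => j _ /=.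
  by rewrite [(b' - b) j 0]mxE [(- b) j 0]mxE mulrDr mulrN h2.
have e2 : \sum_j resid X Y b j 0 * b' j 0 <= lam * norm1 b'.
  rewrite /norm1 mulr_sumr; apply: ler_sum => j _.
  apply: le_trans (ler_norm _) _; rewrite normrM ler_wpM2r //.
have e3 := sqnorm2_ge0 (X *m (b' - b)).
rewrite e1; lra.
Qed.

Lemma dot_delta (R : rcfType) p (r : 'cV[R]_p) (t : R) (j : 'I_p) :
  \sum_k r k 0 * (t *: (delta_mx j 0 : 'cV[R]_p)) k 0 = t * r j 0.
Proof.
rewrite (bigD1 j) //= big1 ?addr0 => [|k /negbTE kj].
  by rewrite !mxE !eqxx /= mulr1 mulrC.
by rewrite !mxE kj /= mulr0 mulr0.
Qed.

Lemma norm1_delta (R : rcfType) p (b : 'cV[R]_p) (t : R) (j : 'I_p) :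
  norm1 (b + t *: (delta_mx j 0 : 'cV[R]_p)) - norm1 b = `|b j 0 + t| - `|b j 0|.
Proof.
rewrite /norm1 (bigD1 j) //= [X in _ - X](bigD1 j) //=.
rewrite !mxE !eqxx /= mulr1.
have -> : \sum_(i < p | i != j) `|(b + t *: (delta_mx j 0 : 'cV[R]_p)) i 0| =
          \sum_(i < p | i != j) `|b i 0|.
  by apply: eq_bigr => i /negbTE ij; rewrite !mxE ij /= mulr0 addr0.
by rewrite opprD addrACA subrr addr0.
Qed.

Lemma sq_delta (R : rcfType) n p (X : 'M[R]_(n,p)) (t : R) (j : 'I_p) :
  sqnorm2 (X *m (t *: (delta_mx j 0 : 'cV[R]_p))) = t ^+ 2 * sqnorm2 (col j X).
Proof.
rewrite -scalemxAr -colE /sqnorm2 mulr_sumr; apply: eq_bigr => i _.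
by rewrite mxE exprMn.
Qed.

Lemma lasso_kkt (R : rcfType) n p (X : 'M[R]_(n,p)) Y lam b : 0 < lam ->
  (forall j, sqnorm2 (col j X) = 1) -> is_lasso_sol X Y lam b ->
  forall j, `|resid X Y b j 0| <= lam /\ resid X Y b j 0 * b j 0 = lam * `|b j 0|.
Proof.
move=> lp hc H j; apply: scal_kkt => // t.
have := H (b + t *: delta_mx j 0); rewrite -subr_ge0 objdiff.
by rewrite dot_delta sq_delta hc mulr1 norm1_delta.
Qed.

Lemma exists_t (R : rcfType) (A B m : R) : 0 < A -> 0 < B -> 0 < m ->
  exists t, [/\ 0 < t, t <= A & t * m <= B].
Proof.
move=> Ap Bp mp; have [h|h] := lerP (A * m) B; first by exists A.
exists (B / m); split; first by rewrite divr_gt0.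
  by rewrite ler_pdivrMr // ltW.
by rewrite divfK // gt_eqF.
Qed.

Lemma norminf_le (R : rcfType) m (v : 'cV[R]_m) a : 0 <= a ->
  (norminf v <= a <-> forall i, `|v i 0| <= a).
Proof.
move=> a0; split => [h i|h].
  by apply: le_trans h; apply: (le_bigmax 0 (fun i => `|v i 0|) i).
by apply: bigmax_le => // i _; apply: h.
Qed.

Lemma resid_shift (R : rcfType) n p (X : 'M[R]_(n,p)) Y b c :
  resid X Y (b - c) = resid X Y b + (X^T *m X) *m c.
Proof.
rewrite /resid !mulmxBr !mulmxA opprB.
by rewrite addrA addrAC.
Qed.

Lemma dantzig_kkt (R : rcfType) n p (X : 'M[R]_(n,p)) Y lam b : 0 < lam ->
  X^T *m X \in unitmx ->
  (forall j : 'I_p, \sum_(i < p | i != j) `|invmx (X^T *m X) i j| < invmx (X^T *m X) j j) ->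
  is_dantzig_sol X Y lam b ->
  forall j, `|resid X Y b j 0| <= lam /\ resid X Y b j 0 * b j 0 = lam * `|b j 0|.
Proof.
move=> lp hU hD [feas opt] j.
have hr : forall k, `|resid X Y b k 0| <= lam by apply/norminf_le => //; exact: ltW.
split; first exact: hr.
set G := X^T *m X in hU hD *; set M := invmx G in hD *.
set r := resid X Y b in hr *.
have Mjj : 0 < M j j.
  by apply: le_lt_trans (hD j); apply: sumr_ge0 => i _.
suff key : forall s : R, (s = 1 /\ 0 < b j 0) \/ (s = -1 /\ b j 0 < 0) -> s * r j 0 = lam.
  have [bp|bn|<-] := ltrgtP 0 (b j 0); last by rewrite mulr0 normr0 mulr0.
    by have := key 1 (or_introl (conj erefl bp)); rewrite mul1r => ->; rewrite gtr0_norm.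
  have := key (-1) (or_intror (conj erefl bn)); rewrite mulN1r => e.
  have -> : r j 0 = - lam by rewrite -e opprK.
  by rewrite ltr0_norm // mulNr mulrN.
move=> s hs.
have hsn : `|s| = 1 by case: hs => [][-> _]; rewrite ?normrN normr1.
have hsb : s * b j 0 = `|b j 0|.
  by case: hs => [][-> h]; rewrite ?mul1r ?mulN1r ?(gtr0_norm h) ?(ltr0_norm h).
have bpos : 0 < `|b j 0| by case: hs => [][_ h]; rewrite normr_gt0 ?(gt_eqF h) ?(lt_eqF h).
have hsr : s * r j 0 <= lam.
  by apply: le_trans (ler_norm _) _; rewrite normrM hsn mul1r.
apply/eqP; rewrite eq_le hsr /= leNgt; apply/negP => hlt.
have [t [tp tA tB]] := @exists_t _ (lam - s * r j 0) `|b j 0| (M j j)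
   ltac:(by rewrite subr_gt0) bpos Mjj.
set c := (t * s) *: col j M.
have hGc : G *m c = (t * s) *: (delta_mx j 0 : 'cV[R]_p).
  by rewrite /c -scalemxAr colE mulmxA mulmxV // mul1mx.
have feas' : dantzig_feasible X Y lam (b - c).
  rewrite /dantzig_feasible.
  change (norminf (resid X Y (b - c)) <= lam).
  rewrite resid_shift -/G hGc; apply/norminf_le; first exact: ltW.
  move=> k; rewrite mxE [Z in resid X Y b k 0 + Z]mxE [Z in _ * Z]mxE.
  have := hr k; rewrite -/r.
  case: (eqVneq k j) => [->|kj] /=; last by rewrite mulr0 addr0.
  rewrite mulr1 !ler_norml => /andP[h1 h2]; apply/andP.
  by case: hs => [][hs _]; rewrite hs ?mul1r ?mulN1r in tA *; split; lra.
have := opt _ feas'; apply/negP; rewrite -ltNge.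
have hc : forall k, (b - c) k 0 = b k 0 - t * s * M k j.
  by move=> k; rewrite !mxE.
rewrite /norm1 (bigD1 j) //= [X in _ < X](bigD1 j) //=.
under eq_bigr do rewrite hc.
rewrite hc.
have h1 : `|b j 0 - t * s * M j j| <= `|b j 0| - t * M j j.
  move: tB; rewrite ler_norml -hsb => tB; apply/andP.
  case: hs => [][hs h]; rewrite hs in tB *;
    rewrite ?mulr1 ?mulrN1 ?mul1r ?mulN1r ?mulNr ?mulrN ?opprK in tB *; split; lra.
have h2 : \sum_(k < p | k != j) `|b k 0 - t * s * M k j| <=
          \sum_(k < p | k != j) `|b k 0| + t * \sum_(k < p | k != j) `|M k j|.
  rewrite mulr_sumr -big_split; apply: ler_sum => k _.
  apply: le_trans (ler_normB _ _) _.
  by rewrite !normrM hsn mulr1 (gtr0_norm tp).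
have h3 : 0 < t * (M j j - \sum_(k < p | k != j) `|M k j|).
  by rewrite mulr_gt0 // subr_gt0.
lra.
Qed.

Lemma LD (R : rcfType) p (M : 'M[R]_p) (S : pred 'I_p) (u : 'cV[R]_p) (a : R) :
  0 <= a ->
  (forall k : 'I_p, \sum_(i < p | i != k) `|M i k| < M k k) ->
  (forall k, S k -> `|u k 0| <= a) ->
  (forall k, ~~ S k -> \sum_j M j k * u j 0 = 0) ->
  forall i, `|u i 0| <= a.
Proof.
move=> a0 hD hS hN i.
have [k _ hk] := @arg_maxP _ _ _ i predT (fun k => `|u k 0|) isT.
apply: le_trans (hk i isT) _.
have [Sk|nSk] := boolP (S k); first exact: hS.
have h := hN k nSk; rewrite (bigD1 k) //= in h.
have e1 : `|M k k * u k 0| <= \sum_(j < p | j != k) `|M j k| * `|u k 0|.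
  have -> : M k k * u k 0 = - \sum_(j < p | j != k) M j k * u j 0.
    by apply/eqP; rewrite -addr_eq0 h.
  rewrite normrN; apply: le_trans (ler_norm_sum _ _ _) _.
  apply: ler_sum => j _; rewrite normrM ler_wpM2l //; exact: hk.
rewrite -mulr_suml normrM (gtr0_norm (le_lt_trans (sumr_ge0 _ (fun _ _ => normr_ge0 _)) (hD k))) in e1.
have := hD k; have := normr_ge0 (u k 0).
set s := \sum_(j < p | j != k) `|M j k|; move=> h0 h1.
have : (M k k - s) * `|u k 0| <= 0 by rewrite mulrBl subr_le0.
rewrite pmulr_rle0 ?subr_gt0 // => h2.
exact: le_trans h2 a0.
Qed.

Definition Tmx (R : rcfType) p (M : 'M[R]_p) (S : pred 'I_p) : 'M[R]_p :=
  \matrix_(k, j) if S k then (k == j)%:R else M j k.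
Arguments Tmx {R p}.

Lemma Tmx_mulS (R : rcfType) p (M : 'M[R]_p) (S : pred 'I_p) (u : 'cV[R]_p) k :
  S k -> (Tmx M S *m u) k 0 = u k 0.
Proof.
move=> Sk; rewrite mxE (bigD1 k) //= big1 ?addr0.
  by rewrite mxE Sk eqxx mul1r.
by move=> j /negbTE jk; rewrite mxE Sk eq_sym jk mul0r.
Qed.
Arguments Tmx_mulS {R p} M {S} u {k}.

Lemma Tmx_mulN (R : rcfType) p (M : 'M[R]_p) (S : pred 'I_p) (u : 'cV[R]_p) k :
  ~~ S k -> (Tmx M S *m u) k 0 = \sum_j M j k * u j 0.
Proof.
move=> /negbTE Sk; rewrite mxE; apply: eq_bigr => j _.
by rewrite mxE Sk.
Qed.
Arguments Tmx_mulN {R p} M {S} u {k}.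

Lemma Tmx_unit (R : rcfType) p (M : 'M[R]_p) (S : pred 'I_p) :
  (forall k : 'I_p, \sum_(i < p | i != k) `|M i k| < M k k) ->
  Tmx M S \in unitmx.
Proof.
move=> hD.
have inj : forall u : 'cV[R]_p, Tmx M S *m u = 0 -> u = 0.
  move=> u hu; apply/matrixP => i j; rewrite (ord1 j) mxE.
  apply/eqP; rewrite -normr_le0.
  apply: (@LD _ _ M S u 0 (lexx 0) hD) => k hk.
    by rewrite -(Tmx_mulS M u hk) hu mxE normr0.
  by rewrite -(Tmx_mulN M u hk) hu mxE.
rewrite -unitmx_tr -row_free_unit -kermx_eq0; apply/eqP/row_matrixP => i.
rewrite row0.
have h : row i (kermx (Tmx M S)^T) *m (Tmx M S)^T = 0.
  by apply/eqP; rewrite -sub_kermx row_sub.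
have h' : Tmx M S *m (row i (kermx (Tmx M S)^T))^T = 0.
  by move: (congr1 trmx h); rewrite trmx_mul trmxK trmx0.
by rewrite -[row i _]trmxK (inj _ h') trmx0.
Qed.

Lemma kkt_dantzig (R : rcfType) n p (X : 'M[R]_(n,p)) Y lam b : 0 < lam ->
  X^T *m X \in unitmx ->
  (forall j : 'I_p, \sum_(i < p | i != j) `|invmx (X^T *m X) i j| < invmx (X^T *m X) j j) ->
  (forall j, `|resid X Y b j 0| <= lam) ->
  (forall j, resid X Y b j 0 * b j 0 = lam * `|b j 0|) ->
  is_dantzig_sol X Y lam b.
Proof.
move=> lp hU hD h1 h2.
have feasb : dantzig_feasible X Y lam b.
  by apply/norminf_le => //; exact: ltW.
split => // b' hb'.
have h1' : forall k, `|resid X Y b' k 0| <= lam by apply/norminf_le => //; exact: ltW.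
set G := X^T *m X in hU hD *; set M := invmx G in hD *.
set r := resid X Y b in h1 h2 *; set r' := resid X Y b' in h1' *.
set S : pred 'I_p := fun k => b k 0 != 0.
have hrS : forall k, S k -> r k 0 = lam * Num.sg (b k 0).
  move=> k Sk; apply: (mulIf Sk); rewrite h2 normrEsg mulrA //.
set c : 'cV[R]_p := \col_k Num.sg (b k 0).
set w := invmx (Tmx M S) *m c.
have hT : Tmx M S *m w = c by rewrite mulKVmx // Tmx_unit.
have hwS : forall k, S k -> w k 0 = Num.sg (b k 0).
  by move=> k Sk; rewrite -(Tmx_mulS M w Sk) hT mxE.
have hwN : forall k, ~~ S k -> \sum_j M j k * w j 0 = 0.
  move=> k nSk; rewrite -(Tmx_mulN M w nSk) hT mxE.
  by move: nSk; rewrite negbK => /eqP ->; rewrite sgr0.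
have hw1 : forall i, `|w i 0| <= 1.
  apply: (@LD _ _ M S w 1 ler01 hD) => // k Sk; by rewrite hwS // normr_sg (Sk : b k 0 != 0).
set v := M^T *m w.
have hv : forall k, v k 0 = \sum_j M j k * w j 0.
  by move=> k; rewrite mxE; apply: eq_bigr => j _; rewrite mxE.
have hvS : forall k, S k -> 0 <= Num.sg (b k 0) * v k 0.
  move=> k Sk; rewrite hv mulr_sumr (bigD1 k) //= hwS // mulrCA -expr2.
  rewrite sqr_sg (Sk : b k 0 != 0) mulr1.
  have hM : \sum_(i < p | i != k) `|M i k| < M k k := hD k.
  have : - \sum_(i < p | i != k) `|M i k| <=
         \sum_(i < p | i != k) Num.sg (b k 0) * (M i k * w i 0).
    rewrite -sumrN; apply: ler_sum => i _.
    have : `|Num.sg (b k 0) * (M i k * w i 0)| <= `|M i k|.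
      rewrite !normrM normr_sg (Sk : b k 0 != 0) mul1r; apply: ler_piMr => //; exact: hw1.
    by rewrite ler_norml => /andP[].
  lra.
have hGv : G^T *m v = w by rewrite /v mulmxA -trmx_mul mulVmx // trmx1 mul1mx.
have hGd : forall k, (G *m (b - b')) k 0 = r' k 0 - r k 0.
  move=> k; have := @resid_shift _ _ _ X Y b (b - b').
  rewrite opprB addrC subrK -/r' -/r -/G => ->.
  by rewrite [in RHS]mxE addrAC subrr add0r.
have key : \sum_j w j 0 * (b - b') j 0 <= 0.
  rewrite -hGv -dotT; apply: sumr_le0 => k _.
  rewrite hGd; have [Sk|nSk] := boolP (S k).
    rewrite mulrBr hrS // mulrCA; have := hvS k Sk.
    move=> hpos.
    have hv1 : `|v k 0| = Num.sg (b k 0) * v k 0.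
      by rewrite -(ger0_norm hpos) normrM normr_sg (Sk : b k 0 != 0) mul1r.
    have : v k 0 * r' k 0 <= `|v k 0| * lam.
      by apply: le_trans (ler_norm _) _; rewrite normrM ler_wpM2l // (h1' k).
    rewrite hv1 => h; lra.
  by rewrite hv hwN // mul0r.
have e1 : \sum_j w j 0 * b j 0 = norm1 b.
  apply: eq_bigr => j _; have [Sj|nSj] := boolP (S j).
    by rewrite hwS // normrEsg.
  by move: nSj; rewrite negbK => /eqP ->; rewrite mulr0 normr0.
have e2 : \sum_j w j 0 * b' j 0 <= norm1 b'.
  apply: ler_sum => j _; apply: le_trans (ler_norm _) _.
  by rewrite normrM ler_piMl // hw1.
have e3 : \sum_j w j 0 * (b - b') j 0 = \sum_j w j 0 * b j 0 - \sum_j w j 0 * b' j 0.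
  by rewrite -sumrB; apply: eq_bigr => j _; rewrite !mxE mulrDr mulrN.
lra.
Qed.

Theorem theorem1 (R : rcfType) (n p : nat) (X : 'M[R]_(n, p)) (Y : 'cV[R]_n) :
  (p <= n)%N ->
  (forall j : 'I_p, norm2 (col j X) = 1) ->
  X^T *m X \in unitmx ->
  (let M := invmx (X^T *m X) in
   forall j : 'I_p, \sum_(i < p | i != j) `|M i j| < M j j) ->
  forall lam : R, 0 < lam ->
  forall b : 'cV[R]_p,
    is_lasso_sol X Y lam b <-> is_dantzig_sol X Y lam b.
Proof.
move=> _ hn hU hD0 lam lp b.
have hD : forall j : 'I_p, \sum_(i < p | i != j) `|invmx (X^T *m X) i j| < invmx (X^T *m X) j j := hD0.
have hc : forall j, sqnorm2 (col j X) = 1.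
  move=> j; have := hn j; rewrite /norm2 => h.
  by rewrite -[sqnorm2 _]sqr_sqrtr ?h ?expr1n //; apply: sqnorm2_ge0.
split => H.
  have k := @lasso_kkt _ _ _ X Y lam b lp hc H.
  by apply: kkt_dantzig => // j; [exact: (k j).1 | exact: (k j).2].
have k := @dantzig_kkt _ _ _ X Y lam b lp hU hD H.
by apply: kkt_lasso => // j; [exact: (k j).1 | exact: (k j).2].
Qed.
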